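(* Let $p,q\ge1$, $\alpha:\mathbb Z_p\times\mathbb Z_q\to[0,1]$ a probability distribution with $\alpha(0,0)=0$, $\mathcal L_*(x)=\sum_{(i,j)}\alpha(p-i,q-j)(J_p^i\otimes J_q^j)x(J_p^i\otimes J_q^j)^*-x$ on $\mathcal M_p(\mathbb C)\otimes\mathcal M_q(\mathbb C)$, and $\mathcal T_{*t}=e^{t\mathcal L_*}$. Set $\alpha'(i,j)=\alpha(i,j)$ for $(i,j)\neq(0,0)$ and $\alpha'(0,0)=-1$, $\lambda_{kl}=\sum_{i,j}\alpha'(i,j)\overline\omega_p^{ik}\overline\omega_q^{jl}$ and $\Phi_{m,n}(t)=\sum_{k,l}\omega_p^{mk}\omega_q^{nl}e^{t\lambda_{kl}}$. Then: (i) for all $(i,j),(i',j')\in\mathbb Z_p\times\mathbb Z_q$ and $t\ge0$, $$\mathcal T_{*t}(|e_i\otimes e_j\rangle\langle e_{i'}\otimes e_{j'}|)=\frac{1}{pq}\sum_{m,n}\Phi_{m,n}(t)|e_{m+i}\otimes e_{n+j}\rangle\langle e_{m+i'}\otimes e_{n+j'}|,$$ and the functions $\Phi_{m,n}(t)$ are real-valued; (ii) $\Omega_t=\frac{1}{pq}\sum_{m,n}\Phi_{m,n}(t)|u_{mn}\rangle\langle u_{mn}|$, where $u_{mn}=\frac{1}{\sqrt{pq}}\sum_{i,j}(e_i\otimes e_j)\otimes(e_{m+i}\otimes e_{n+j})$.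
   Context: $\{e_j\}$ canonical bases of $\mathbb C^p,\mathbb C^q$ (indices mod $p$, $q$); $J_p=\sum_j|e_j\rangle\langle e_{j+1}|$, similarly $J_q$; $\omega_p,\omega_q$ primitive roots of unity of orders $p,q$; arguments of $\alpha$ mod $p,q$. With $\rho=\frac{1}{pq}\mathbf 1$, $\Omega_\rho=\frac{1}{\sqrt{pq}}\sum_{i,j}(e_i\otimes e_j)\otimes(e_i\otimes e_j)\in(\mathbb C^p\otimes\mathbb C^q)^{\otimes2}$ and $\Omega_t=(\mathrm{id}\otimes\mathcal T_{*t})(|\Omega_\rho\rangle\langle\Omega_\rho|)$. *)

(* Defs.v *)
From HB Require Import structures.
From mathcomp Require Import all_boot all_order all_algebra.
From mathcomp Require Import all_classical all_reals all_analysis.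
From mathcomp.real_closed Require Import complex.

Set Implicit Arguments.
Unset Strict Implicit.
Unset Printing Implicit Defensive.

Import Order.TTheory GRing.Theory Num.Theory.
Local Open Scope ring_scope.
Local Open Scope complex_scope.

Definition csum_lim {R : realType} (u : nat -> R[i]) : R[i] :=
  (limn (series (fun k => (complex.Re (u k) : R) : R^o))) +i*
  (limn (series (fun k => (complex.Im (u k) : R) : R^o))).

Definition cexp {R : realType} (z : R[i]) : R[i] :=
  csum_lim (fun k => z ^+ k / (k`!)%:R).

Definition vec (R : realType) (I : finType) := I -> R[i].
Definition op (R : realType) (I : finType) := I -> I -> R[i].

Definition opid {R : realType} {I : finType} : op R I :=
  fun a b => (a == b)%:R.
Definition opmul {R : realType} {I : finType} (A B : op R I) : op R I :=
  fun a b => \sum_(c : I) A a c * B c b.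
Definition oppow {R : realType} {I : finType} (A : op R I) (n : nat) : op R I :=
  iter n (opmul A) opid.
Definition opadj {R : realType} {I : finType} (A : op R I) : op R I :=
  fun a b => (A b a)^*.
Definition outer {R : realType} {I : finType} (u v : vec R I) : op R I :=
  fun a b => u a * (v b)^*.
Definition bvec {R : realType} {I : finType} (i : I) : vec R I :=
  fun a => (a == i)%:R.
Definition vtens {R : realType} {I J : finType} (u : vec R I) (v : vec R J)
  : vec R (I * J)%type := fun ab => u ab.1 * v ab.2.
Definition optens {R : realType} {I J : finType} (A : op R I) (B : op R J)
  : op R (I * J)%type := fun a b => A a.1 b.1 * B a.2 b.2.
(* id (x) T on operators of C^I (x) C^J, for T acting on operators of C^J *)
Definition idtens {R : realType} {I J : finType} (T : op R J -> op R J)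
  (X : op R (I * J)%type) : op R (I * J)%type :=
  fun a b => T (fun k k' => X (a.1, k) (b.1, k')) a.2 b.2.

Lemma ord_n_gt0 (n : nat) (i : 'I_n) : (0 < n)%N.
Proof. exact: leq_ltn_trans (leq0n i) (ltn_ord i). Qed.

Definition zadd {n : nat} (i j : 'I_n) : 'I_n :=
  Ordinal (ltn_pmod (i + j) (ord_n_gt0 i)).
Definition zopp {n : nat} (i : 'I_n) : 'I_n :=
  Ordinal (ltn_pmod (n - i) (ord_n_gt0 i)).
Definition zsucc {n : nat} (i : 'I_n) : 'I_n :=
  Ordinal (ltn_pmod i.+1 (ord_n_gt0 i)).

Definition Jshift (R : realType) (n : nat) : op R 'I_n :=
  fun a b => \sum_(j : 'I_n) outer (bvec j) (bvec (zsucc j)) a b.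

Definition Lstar {R : realType} {p q : nat} (alpha : 'I_p -> 'I_q -> R)
  (x : op R ('I_p * 'I_q)%type) : op R ('I_p * 'I_q)%type :=
  fun a b =>
    \sum_(ij : ('I_p * 'I_q)%type)
       (alpha (zopp ij.1) (zopp ij.2))%:C *
       (let U := optens (oppow (@Jshift R p) ij.1) (oppow (@Jshift R q) ij.2) in
        opmul (opmul U x) (opadj U)) a b
    - x a b.

Definition opexp {R : realType} {I : finType} (L : op R I -> op R I) (t : R)
  (x : op R I) : op R I :=
  fun a b => csum_lim (fun k => (t%:C) ^+ k / (k`!)%:R * iter k L x a b).

Definition Tstar {R : realType} {p q : nat} (alpha : 'I_p -> 'I_q -> R) (t : R)
  : op R ('I_p * 'I_q)%type -> op R ('I_p * 'I_q)%type :=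
  opexp (Lstar alpha) t.

Definition alpha' {R : realType} {p q : nat} (alpha : 'I_p -> 'I_q -> R)
  (i : 'I_p) (j : 'I_q) : R :=
  if ((i : nat) == 0%N) && ((j : nat) == 0%N) then -1 else alpha i j.

Definition lambda {R : realType} {p q : nat} (alpha : 'I_p -> 'I_q -> R)
  (wp wq : R[i]) (k : 'I_p) (l : 'I_q) : R[i] :=
  \sum_(i : 'I_p) \sum_(j : 'I_q)
     (alpha' alpha i j)%:C * (wp^*) ^+ (i * k) * (wq^*) ^+ (j * l).

Definition Phi {R : realType} {p q : nat} (alpha : 'I_p -> 'I_q -> R)
  (wp wq : R[i]) (m : 'I_p) (n : 'I_q) (t : R) : R[i] :=
  \sum_(k : 'I_p) \sum_(l : 'I_q)
     wp ^+ (m * k) * wq ^+ (n * l) * cexp (t%:C * lambda alpha wp wq k l).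

Definition ebas {R : realType} {p q : nat} (i : 'I_p) (j : 'I_q)
  : vec R ('I_p * 'I_q)%type := vtens (bvec i) (bvec j).

Definition Omega_rho {R : realType} (p q : nat)
  : vec R (('I_p * 'I_q) * ('I_p * 'I_q))%type :=
  fun a => ((Num.sqrt ((p * q)%:R : R))%:C)^-1 *
    \sum_(ij : ('I_p * 'I_q)%type)
       vtens (ebas ij.1 ij.2) (ebas ij.1 ij.2) a.

Definition uvec {R : realType} {p q : nat} (m : 'I_p) (n : 'I_q)
  : vec R (('I_p * 'I_q) * ('I_p * 'I_q))%type :=
  fun a => ((Num.sqrt ((p * q)%:R : R))%:C)^-1 *
    \sum_(ij : ('I_p * 'I_q)%type)
       vtens (ebas ij.1 ij.2) (ebas (zadd m ij.1) (zadd n ij.2)) a.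

Definition Omega_t {R : realType} {p q : nat} (alpha : 'I_p -> 'I_q -> R) (t : R)
  : op R (('I_p * 'I_q) * ('I_p * 'I_q))%type :=
  idtens (Tstar alpha t) (outer (@Omega_rho R p q) (@Omega_rho R p q)).

(* Main.v *)
Require Import Defs.
From HB Require Import structures.
From mathcomp Require Import all_boot all_order all_algebra.
From mathcomp Require Import all_classical all_reals all_analysis.
From mathcomp.real_closed Require Import complex.
From mathcomp Require Import ring.
Import Order.TTheory GRing.Theory Num.Theory.
Set Implicit Arguments.
Unset Strict Implicit.
Local Open Scope ring_scope.
Local Open Scope complex_scope.

Section An.
Local Open Scope classical_set_scope.
Variable R : realType.

Definition ccvg (u : nat -> R[i]) (z : R[i]) :=
  (series (fun k => (complex.Re (u k) : R) : R^o)) @ \oo --> (complex.Re z : R^o) /\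
  (series (fun k => (complex.Im (u k) : R) : R^o)) @ \oo --> (complex.Im z : R^o).

Lemma ccvg_lim u z : ccvg u z -> csum_lim u = z.
Proof.
case=> h1 h2; rewrite /csum_lim (cvg_lim _ h1) // (cvg_lim _ h2) //.
by case: z {h1 h2}.
Qed.

Lemma ccvg_ext {u v z} : (forall k, u k = v k) -> ccvg u z -> ccvg v z.
Proof. by move=> h; have -> : u = v by apply/funext. Qed.

Lemma ser_lin (f g : nat -> R) (a b : R) :
  series (fun k => (a * f k + b * g k : R) : R^o) =
  (fun n => a * series (f : R^o ^nat) n + b * series (g : R^o ^nat) n).
Proof.
apply/funext => n; rewrite /series /= big_split /= -!mulr_sumr //.
Qed.

Lemma cvg_lin (a b : R) {F G : nat -> R} {l m : R} :
  (F : R^o ^nat) @ \oo --> (l : R^o) -> (G : R^o ^nat) @ \oo --> (m : R^o) ->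
  ((fun n => a * F n + b * G n) : R^o ^nat) @ \oo --> (a * l + b * m : R^o).
Proof.
move=> hF hG.
apply: cvgD; [exact: cvgMl_tmp | exact: cvgMl_tmp].
Qed.

Lemma ccvg0 : ccvg (fun _ => 0) 0.
Proof.
split; rewrite /=.
- have -> : series (fun _ : nat => (0 : R) : R^o) = fun _ => 0.
    by apply/funext => n; rewrite /series /= big1.
  exact: cvg_cst.
- have -> : series (fun _ : nat => (0 : R) : R^o) = fun _ => 0.
    by apply/funext => n; rewrite /series /= big1.
  exact: cvg_cst.
Qed.

Lemma ccvgD {u v z w} : ccvg u z -> ccvg v w -> ccvg (fun k => u k + v k) (z + w).
Proof.
case=> h1 h2 [h3 h4]; split.
- have -> : series (fun k => (complex.Re (u k + v k) : R) : R^o) =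
    (fun n => 1 * series (fun k => (complex.Re (u k) : R) : R^o) n +
              1 * series (fun k => (complex.Re (v k) : R) : R^o) n).
    rewrite -ser_lin; congr series; apply/funext => k; rewrite !mul1r.
    by case: (u k) => ? ?; case: (v k).
  have -> : complex.Re (z + w) = 1 * complex.Re z + 1 * complex.Re w.
    by rewrite !mul1r; case: z {h1 h2}; case: w {h3 h4}.
  exact: cvg_lin.
- have -> : series (fun k => (complex.Im (u k + v k) : R) : R^o) =
    (fun n => 1 * series (fun k => (complex.Im (u k) : R) : R^o) n +
              1 * series (fun k => (complex.Im (v k) : R) : R^o) n).
    rewrite -ser_lin; congr series; apply/funext => k; rewrite !mul1r.
    by case: (u k) => ? ?; case: (v k).
  have -> : complex.Im (z + w) = 1 * complex.Im z + 1 * complex.Im w.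
    by rewrite !mul1r; case: z {h1 h2}; case: w {h3 h4}.
  exact: cvg_lin.
Qed.

Lemma ccvgZ c {u z} : ccvg u z -> ccvg (fun k => c * u k) (c * z).
Proof.
case: c => a b [h1 h2]; split.
- have -> : series (fun k => (complex.Re ((a +i* b) * u k) : R) : R^o) =
    (fun n => a * series (fun k => (complex.Re (u k) : R) : R^o) n +
              - b * series (fun k => (complex.Im (u k) : R) : R^o) n).
    rewrite -ser_lin; congr series; apply/funext => k.
    by case: (u k) => ? ? /=; rewrite mulNr.
  have -> : complex.Re ((a +i* b) * z) = a * complex.Re z + - b * complex.Im z.
    by case: z {h1 h2} => ? ? /=; rewrite mulNr.
  exact: cvg_lin.
- have -> : series (fun k => (complex.Im ((a +i* b) * u k) : R) : R^o) =
    (fun n => b * series (fun k => (complex.Re (u k) : R) : R^o) n +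
              a * series (fun k => (complex.Im (u k) : R) : R^o) n).
    rewrite -ser_lin; congr series; apply/funext => k.
    by case: (u k) => ? ? /=; rewrite addrC.
  have -> : complex.Im ((a +i* b) * z) = b * complex.Re z + a * complex.Im z.
    by case: z {h1 h2} => ? ? /=; rewrite addrC.
  exact: cvg_lin.
Qed.

Lemma ccvg_sum (I : Type) (r : seq I) (F : I -> nat -> R[i]) (z : I -> R[i]) :
  (forall i, ccvg (F i) (z i)) ->
  ccvg (fun k => \sum_(i <- r) F i k) (\sum_(i <- r) z i).
Proof.
move=> h; elim: r => [|x r IH].
  by rewrite big_nil; apply: (ccvg_ext _ (@ccvg0)) => k; rewrite big_nil.
rewrite big_cons; apply: (ccvg_ext _ (ccvgD (h x) IH)) => k.
by rewrite big_cons.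
Qed.

Lemma ccvg_fsum (I : finType) (F : I -> nat -> R[i]) (z : I -> R[i]) :
  (forall i, ccvg (F i) (z i)) ->
  ccvg (fun k => \sum_(i : I) F i k) (\sum_(i : I) z i).
Proof. exact: ccvg_sum. Qed.

Lemma Re_le_normc (w : R[i]) : `|complex.Re w| <= Normc.normc w.
Proof.
case: w => a b /=; rewrite -sqrtr_sqr ler_wsqrtr // lerDl sqr_ge0 //.
Qed.
Lemma Im_le_normc (w : R[i]) : `|complex.Im w| <= Normc.normc w.
Proof.
case: w => a b /=; rewrite -sqrtr_sqr ler_wsqrtr // lerDr sqr_ge0 //.
Qed.

Lemma normc_expk (z : R[i]) k :
  Normc.normc (z ^+ k / k`!%:R) = Normc.normc z ^+ k / k`!%:R.
Proof.
rewrite Normc.normcM Normc.normcV.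
have -> : Normc.normc (k`!%:R : R[i]) = k`!%:R.
  by rewrite normcMn Normc.normc1.
congr (_ * _); elim: k => [|k IH]; first by rewrite !expr0 Normc.normc1.
by rewrite !exprS Normc.normcM IH.
Qed.

Lemma cvg_part (f : R[i] -> R) (z : R[i]) :
  (forall w, `|f w| <= Normc.normc w) ->
  cvgn (series (fun k => (f (z ^+ k / k`!%:R) : R) : R^o)).
Proof.
move=> hf; apply: normed_cvg.
apply: (@series_le_cvg R _ (exp_coeff (Normc.normc z))).
- by move=> n; rewrite normr_ge0.
- move=> n; apply: exp_coeff_ge0.
  by case: z {hf} => a b /=; rewrite sqrtr_ge0.
- by move=> n; rewrite /exp_coeff /= -normc_expk; exact: hf.
- exact: is_cvg_series_exp_coeff.
Qed.

Lemma ccvg_exp z : ccvg (fun k => z ^+ k / k`!%:R) (cexp z).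
Proof.
split; rewrite /cexp /csum_lim /=.
- exact: (@cvg_part (@complex.Re R) z (@Re_le_normc)).
- exact: (@cvg_part (@complex.Im R) z (@Im_le_normc)).
Qed.

End An.


Section Basic.
Variable R : realType.

Lemma sum_dl (T : finType) (x : T) (f : T -> R[i]) :
  \sum_c ((c == x)%:R * f c) = f x.
Proof.
rewrite (bigD1 x) //= eqxx mul1r big1 ?addr0 // => c /negPf ->; by rewrite mul0r.
Qed.

Lemma sum_dr (T : finType) (x : T) (f : T -> R[i]) :
  \sum_c (f c * (c == x)%:R) = f x.
Proof. rewrite -[RHS](sum_dl x); apply: eq_bigr => c _; exact: mulrC. Qed.

Lemma zaddE n (i j : 'I_n.+1) : zadd i j = (i + j)%R.
Proof. exact: val_inj. Qed.
Lemma zoppE n (i : 'I_n.+1) : zopp i = (- i)%R.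
Proof. exact: val_inj. Qed.

Lemma inZpD n a b : (inZp (a + b) : 'I_n.+1) = (inZp a + inZp b)%R.
Proof. apply: val_inj => /=; by rewrite modnDm. Qed.

Lemma natC_conj (b : bool) : ((b%:R : R[i])^*)%C = b%:R.
Proof. exact: conjC_nat. Qed.

Lemma JpowE n k : oppow (@Jshift R n.+1) k =
  fun a b => ((b == a + inZp k)%R%:R : R[i]).
Proof.
elim: k => [|k IH]; apply/funext => a; apply/funext => b.
  rewrite /oppow /= /opid; congr (_%:R).
  have -> : (inZp 0 : 'I_n.+1) = 0%R by apply: val_inj.
  by rewrite addr0 eq_sym.
rewrite /oppow iterS -/(oppow _ k) IH /opmul.
have hJ : forall c, @Jshift R n.+1 a c = ((c == a + inZp 1)%R%:R : R[i]).
  move=> c; rewrite /Jshift /outer /bvec.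
  rewrite (eq_bigr (fun j => (j == a)%:R * ((c == zsucc j)%:R))).
    rewrite (eq_bigr (fun j => ((j == a)%:R * ((c == zsucc j)%:R : R[i])))) //.
    rewrite (bigD1 a) //= eqxx mul1r big1 ?addr0.
      congr (_%:R); congr (c == _); apply: val_inj; by rewrite /= modnDmr addn1.
    by move=> j /negPf ->; rewrite mul0r.
  by move=> j _; rewrite conjC_nat eq_sym.
rewrite (eq_bigr (fun c => ((c == a + inZp 1)%R%:R * ((b == c + inZp k)%R%:R : R[i])))).
  rewrite sum_dl; congr (_%:R); by rewrite -addrA -inZpD.
by move=> c _; rewrite hJ.
Qed.

End Basic.


Section Ops.
Variable R : realType.
Variables p' q' : nat.
Local Notation P := p'.+1.
Local Notation Q := q'.+1.
Local Notation K := ('I_P * 'I_Q)%type.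
Variable alpha : 'I_P -> 'I_Q -> R.

Lemma pair_nat (x y : K) :
  ((x.1 == y.1)%:R * (x.2 == y.2)%:R : R[i]) = (x == y)%:R.
Proof. case: x y => [x1 x2] [y1 y2]; by rewrite xpair_eqE /= -natrM mulnb. Qed.

Lemma conjU (X : op R K) (s u : nat) (a b : K) :
  opmul (opmul (optens (oppow (@Jshift R P) s) (oppow (@Jshift R Q) u)) X)
     (opadj (optens (oppow (@Jshift R P) s) (oppow (@Jshift R Q) u))) a b =
  X (a + (inZp s, inZp u)) (b + (inZp s, inZp u)).
Proof.
rewrite /opmul /opadj /optens !JpowE.
rewrite (eq_bigr (fun c => X (a + (inZp s, inZp u)) c *
                 (c == b + (inZp s, inZp u))%:R)).
  exact: sum_dr.
move=> c _; congr (_ * _).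
  rewrite (eq_bigr (fun d => (d == a + (inZp s, inZp u))%:R * X d c)).
    exact: sum_dl.
  move=> d _; congr (_ * _); exact: (pair_nat d (a + (inZp s, inZp u))).
rewrite (_ : _ * _ = (c == b + (inZp s, inZp u))%:R); last first.
  exact: (pair_nat c (b + (inZp s, inZp u))).
by rewrite ?conjc_nat ?conjC_nat ?rmorph_nat.
Qed.

Lemma LstarE0 (X : op R K) a b :
  Lstar alpha X a b =
  \sum_(s : K) (alpha (- s.1) (- s.2))%:C * X (a + s) (b + s) - X a b.
Proof.
rewrite /Lstar /=; congr (_ - _); apply: eq_bigr => s _.
rewrite conjU !zoppE !valZpK; by case: s.
Qed.

Lemma LstarE (X : op R K) a b :
  Lstar alpha X a b =
  \sum_(s : K) (alpha s.1 s.2)%:C * X (a - s) (b - s) - X a b.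
Proof.
rewrite LstarE0; congr (_ - _).
rewrite (reindex_inj (@oppr_inj K)) /=; apply: eq_bigr => s _.
by rewrite !opprK.
Qed.

Lemma Lstar_scale (c : R[i]) (X : op R K) :
  Lstar alpha (fun a b => c * X a b) = fun a b => c * Lstar alpha X a b.
Proof.
apply/funext => a; apply/funext => b; rewrite !LstarE mulrBr mulr_sumr.
congr (_ - _); apply: eq_bigr => s _; by rewrite mulrCA.
Qed.

Section M.
Variables x0 y0 : K.

Definition Mop (c : K -> R[i]) : op R K :=
  fun a b => \sum_(m : K) c m * ((a == m + x0) && (b == m + y0))%:R.

Definition cnvL (c : K -> R[i]) : K -> R[i] :=
  fun m => \sum_(s : K) (alpha s.1 s.2)%:C * c (m - s) - c m.

Lemma LM c : Lstar alpha (Mop c) = Mop (cnvL c).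
Proof.
apply/funext => a; apply/funext => b; rewrite LstarE /Mop /cnvL; symmetry.
rewrite (eq_bigr (fun m => (\sum_(s : K) (alpha s.1 s.2)%:C * c (m - s)) *
    ((a == m + x0) && (b == m + y0))%:R - c m * ((a == m + x0) && (b == m + y0))%:R));
  last by move=> m _ /=; rewrite mulrBl.
rewrite sumrB; congr (_ - _).
rewrite (eq_bigr (fun m => \sum_(s : K) (alpha s.1 s.2)%:C * c (m - s) *
    ((a == m + x0) && (b == m + y0))%:R)); last by move=> m _; rewrite mulr_suml.
rewrite exchange_big /=; apply: eq_bigr => s _.
symmetry; rewrite mulr_sumr (reindex_inj (addIr (- s))) /=; apply: eq_bigr => m _.
rewrite mulrA; congr (_ * _%:R).
by rewrite !(addrAC m (- s)) !(inj_eq (addIr _)).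
Qed.

Lemma Mop_delta : Mop (fun m => (m == 0)%:R) =
  fun a b => ((a == x0) && (b == y0))%:R.
Proof.
apply/funext => a; apply/funext => b; rewrite /Mop.
rewrite (eq_bigr (fun m => (m == 0)%:R * ((a == m + x0) && (b == m + y0))%:R)) //.
by rewrite sum_dl !add0r.
Qed.

End M.
End Ops.


Section Roots.
Variable R : realType.

Lemma root_conj n (w : R[i]) : n.+1.-primitive_root w -> w * w^* = 1.
Proof.
move=> hw; rewrite -normCK.
have h1 : `|w| ^+ n.+1 = 1 by rewrite -normrX prim_expr_order // normr1.
have /eqP -> : `|w| == 1 by rewrite -(pexpr_eq1 (n := n.+1)) // h1.
by rewrite expr1n.
Qed.

Lemma root_sub n (w : R[i]) : n.+1.-primitive_root w -> forall (x y : 'I_n.+1) k,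
  w ^+ ((x - y)%R * k) = w ^+ (x * k) * (w^*) ^+ (y * k).
Proof.
move=> hw x y k.
have hc := @root_conj n w hw.
have e : w ^+ ((x - y)%R * k) * w ^+ (y * k) = w ^+ (x * k).
  rewrite -exprD -mulnDl !exprM.
  have -> : w ^+ ((x - y)%R + y) = w ^+ x.
    by rewrite -(prim_expr_mod hw) -[in RHS](subrK y x).
  by [].
rewrite -e -mulrA -exprMn hc expr1n mulr1 //.
Qed.

Lemma sum_root n (w : R[i]) : n.+1.-primitive_root w -> forall (x : 'I_n.+1),
  \sum_(k < n.+1) w ^+ (x * k) = ((x : nat) == 0%N)%:R * n.+1%:R.
Proof.
move=> hw x; have [x0|xn0] := eqVneq (x : nat) 0%N.
  rewrite x0 mul1r (eq_bigr (fun _ => 1)); last by move=> k _; rewrite mul0n expr0.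
  by rewrite sumr_const card_ord.
rewrite mul0r.
have hy : w ^+ x != 1.
  rewrite -(prim_order_dvd hw); apply/negP => /dvdn_leq.
  rewrite lt0n xn0 => /(_ isT); rewrite leqNgt ltn_ord //.
have hy1 : (w ^+ x) ^+ n.+1 = 1.
  by rewrite -exprM mulnC exprM (prim_expr_order hw) expr1n.
have := subrX1 (w ^+ x) n.+1; rewrite hy1 subrr => /esym/eqP.
rewrite mulf_eq0 subr_eq0 (negPf hy) /= => /eqP h.
rewrite (eq_bigr (fun k : 'I_n.+1 => (w ^+ x) ^+ k)) ?h // => k _; exact: exprM.
Qed.

End Roots.
Arguments root_conj {R n w}.
Arguments root_sub {R n w}.
Arguments sum_root {R n w}.


Section Char.
Variable R : realType.
Variables p' q' : nat.
Local Notation P := p'.+1.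
Local Notation Q := q'.+1.
Local Notation K := ('I_P * 'I_Q)%type.
Variable alpha : 'I_P -> 'I_Q -> R.
Hypothesis alpha00 : forall (i : 'I_P) (j : 'I_Q), (i : nat) = 0%N -> (j : nat) = 0%N ->
     alpha i j = 0.
Variables wp wq : R[i].
Hypothesis hwp : P.-primitive_root wp.
Hypothesis hwq : Q.-primitive_root wq.

Definition fch (κ m : K) : R[i] := wp ^+ (m.1 * κ.1) * wq ^+ (m.2 * κ.2).
Definition lam (κ : K) : R[i] := lambda alpha wp wq κ.1 κ.2.
Definition Gc (κ s : K) : R[i] := (wp^*) ^+ (s.1 * κ.1) * (wq^*) ^+ (s.2 * κ.2).

Lemma f_sub κ m s : fch κ (m - s) = fch κ m * Gc κ s.
Proof.
rewrite /fch /Gc /= (root_sub hwp) (root_sub hwq).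
by rewrite -!mulrA; congr (_ * _); rewrite mulrCA.
Qed.

Lemma lam_alt κ : lam κ = \sum_(s : K) (alpha s.1 s.2)%:C * Gc κ s - 1.
Proof.
rewrite /lam /lambda pair_big /=.
rewrite (bigD1 (0 : K)) //= [in RHS](bigD1 (0 : K)) //=.
have h0 : alpha' alpha 0 0 = -1 by [].
rewrite h0 alpha00 // /Gc /= !mul0n !expr0 !mulr1.
rewrite rmorphN1 rmorph0 add0r addrC.
congr (_ + _).
apply: eq_bigr => s hs; rewrite mulrA; congr (_ * _ * _).
case: s hs => [s1 s2]; rewrite /alpha' /= => hs.
case: ifP => //; case/andP => /eqP h1 /eqP h2.
have e1 : s1 = 0 by apply: val_inj.
have e2 : s2 = 0 by apply: val_inj.
by move: hs; rewrite e1 e2 eqxx.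
Qed.

Lemma conv_f κ : cnvL alpha (fch κ) = fun m => lam κ * fch κ m.
Proof.
apply/funext => m; rewrite /cnvL lam_alt mulrBl mul1r; congr (_ - _).
rewrite mulr_suml; apply: eq_bigr => s _; rewrite f_sub.
by ring.
Qed.

Lemma delta_f m : (m == 0)%:R = \sum_(κ : K) ((P * Q)%:R^-1) * fch κ m.
Proof.
rewrite -mulr_sumr /fch.
rewrite -(pair_big predT predT (fun (k : 'I_P) (l : 'I_Q) => wp ^+ (m.1 * k) * wq ^+ (m.2 * l))) /=.
rewrite -big_distrlr /= (sum_root hwp) (sum_root hwq).
case: m => [m1 m2] /=; rewrite xpair_eqE.
have e1 : (m1 == 0) = ((m1 : nat) == 0%N) by [].
have e2 : (m2 == 0) = ((m2 : nat) == 0%N) by [].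
rewrite e1 e2; case: eqP => _; case: eqP => _ /=; rewrite ?mul0r ?mulr0 ?mul1r //.
by rewrite -natrM mulVf // pnatr_eq0 muln_eq0.
Qed.

Lemma conv_lin (a : K -> R[i]) (h : K -> K -> R[i]) :
  cnvL alpha (fun m => \sum_(κ : K) a κ * h κ m) =
  fun m => \sum_(κ : K) a κ * cnvL alpha (h κ) m.
Proof.
apply/funext => m; rewrite /cnvL; symmetry.
rewrite (eq_bigr (fun κ => a κ * \sum_(s : K) (alpha s.1 s.2)%:C * h κ (m - s) -
   a κ * h κ m)); last by move=> κ _; rewrite mulrBr.
rewrite sumrB; congr (_ - _).
rewrite [RHS](eq_bigr (fun s => \sum_(κ : K) (alpha s.1 s.2)%:C * (a κ * h κ (m - s))));
  last by move=> s _; rewrite mulr_sumr.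
rewrite [RHS]exchange_big /=; apply: eq_bigr => κ _; rewrite mulr_sumr.
by apply: eq_bigr => s _; ring.
Qed.

Definition gk (k : nat) (m : K) : R[i] :=
  \sum_(κ : K) ((P * Q)%:R^-1 * lam κ ^+ k) * fch κ m.

Lemma gk0 : gk 0 = fun m => (m == 0)%:R.
Proof. apply/funext => m; rewrite delta_f; apply: eq_bigr => κ _; by rewrite expr0 mulr1. Qed.

Lemma gkS k : cnvL alpha (gk k) = gk k.+1.
Proof.
rewrite /gk conv_lin; apply/funext => m; apply: eq_bigr => κ _.
by rewrite conv_f exprSr; ring.
Qed.

Lemma iterL x0 y0 k :
  iter k (Lstar alpha) (Mop x0 y0 (fun m => (m == 0)%:R)) = Mop x0 y0 (gk k).
Proof.
elim: k => [|k IH]; first by rewrite /= gk0.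
by rewrite iterS IH LM gkS.
Qed.

End Char.


Section Main.
Variable R : realType.
Variables p' q' : nat.
Local Notation P := p'.+1.
Local Notation Q := q'.+1.
Local Notation K := ('I_P * 'I_Q)%type.
Variable alpha : 'I_P -> 'I_Q -> R.
Hypothesis alpha00 : forall (i : 'I_P) (j : 'I_Q), (i : nat) = 0%N -> (j : nat) = 0%N ->
     alpha i j = 0.
Variables wp wq : R[i].
Hypothesis hwp : P.-primitive_root wp.
Hypothesis hwq : Q.-primitive_root wq.
Local Notation eb := (@ebas R P Q).

Lemma ebasE (i : 'I_P) (j : 'I_Q) (x : K) : eb i j x = (x == (i, j))%:R.
Proof. rewrite /ebas /vtens /bvec; case: x => x1 x2 /=; by rewrite xpair_eqE -natrM mulnb. Qed.

Lemma outer_ebas (i i' : 'I_P) (j j' : 'I_Q) :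
  outer (eb i j) (eb i' j') =
  fun a b => ((a == (i, j)) && (b == (i', j')))%:R.
Proof.
apply/funext => a; apply/funext => b.
by rewrite /outer !ebasE conjC_nat -natrM mulnb.
Qed.

Definition RHS (i i' : 'I_P) (j j' : 'I_Q) (t : R) : op R K :=
  fun a b => ((P * Q)%:R)^-1 *
        \sum_(m : 'I_P) \sum_(n : 'I_Q)
          Phi alpha wp wq m n t *
          outer (eb (zadd m i) (zadd n j)) (eb (zadd m i') (zadd n j')) a b.

Lemma PhiE (m : K) t :
  Phi alpha wp wq m.1 m.2 t = \sum_(κ : K) fch wp wq κ m * cexp (t%:C * lam alpha wp wq κ).
Proof. by rewrite /Phi pair_big. Qed.

Lemma T_ccvg (i i' : 'I_P) (j j' : 'I_Q) t a b :
  ccvg (fun k => (t%:C) ^+ k / (k`!)%:R *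
     iter k (Lstar alpha) (outer (eb i j) (eb i' j')) a b)
    (RHS i i' j j' t a b).
Proof.
have eO : outer (eb i j) (eb i' j') = Mop (i, j) (i', j') (fun m => (m == 0)%:R).
  by rewrite Mop_delta outer_ebas.
rewrite eO.
pose E (m : K) : R[i] := ((a == m + (i, j)) && (b == m + (i', j')))%:R.
have -> : RHS i i' j j' t a b = \sum_(m : K) \sum_(κ : K)
    (E m * ((P * Q)%:R^-1 * fch wp wq κ m)) * cexp (t%:C * lam alpha wp wq κ).
  rewrite /RHS pair_big mulr_sumr; apply: eq_bigr => m _.
  rewrite PhiE outer_ebas !zaddE.
  rewrite mulr_suml mulr_sumr; apply: eq_bigr => κ _.
  rewrite /E (_ : (m.1 + i, m.2 + j) = m + (i, j)) // (_ : (m.1 + i', m.2 + j') = m + (i', j')) //; ring.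
apply: (ccvg_ext _ (ccvg_fsum (fun m => ccvg_fsum (fun κ => ccvgZ _ (ccvg_exp _))))).
move=> k; rewrite (iterL alpha00 hwp hwq) /Mop mulr_sumr; apply: eq_bigr => m _.
rewrite /gk mulr_suml mulr_sumr; apply: eq_bigr => κ _.
rewrite exprMn /E; ring.
Qed.


Lemma Im_fsum (I : finType) (F : I -> R[i]) :
  complex.Im (\sum_(i : I) F i) = \sum_(i : I) complex.Im (F i).
Proof.
elim/big_rec2: _ => //= i x y _ <-; by case: (F i); case: y.
Qed.

Lemma Im_rmul (x : R) (z : R[i]) : complex.Im (x%:C * z) = x * complex.Im z.
Proof. case: z => a b /=; by rewrite mul0r addr0. Qed.

Lemma Im_gk k m : complex.Im (gk alpha wp wq k m) = 0.
Proof.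
elim: k m => [|k IH] m; first by rewrite (gk0 alpha hwp hwq); case: (m == 0).
rewrite -(gkS alpha00 hwp hwq) /cnvL.
have -> : forall z w : R[i], complex.Im (z - w) = complex.Im z - complex.Im w.
  by move=> [? ?] [? ?].
rewrite IH subr0 Im_fsum big1 // => s _; by rewrite Im_rmul IH mulr0.
Qed.

Lemma Phi_real (m : 'I_P) (n : 'I_Q) t : complex.Im (Phi alpha wp wq m n t) = 0.
Proof.
have := ccvg_fsum (fun κ => ccvgZ (fch wp wq κ (m, n)) (ccvg_exp (t%:C * lam alpha wp wq κ))).
rewrite -(PhiE (m, n)) => -[_ h2].
have e : series (fun k => (complex.Im (\sum_(κ : K) fch wp wq κ (m, n) *
      ((t%:C * lam alpha wp wq κ) ^+ k / k`!%:R)) : R) : R^o) = fun _ => 0.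
  apply/funext => N; rewrite /series /= big1 // => k _.
  have -> : \sum_(κ : K) fch wp wq κ (m, n) * ((t%:C * lam alpha wp wq κ) ^+ k / k`!%:R)
     = ((P * Q)%:R * (t ^+ k / k`!%:R))%:C * gk alpha wp wq k (m, n).
    rewrite /gk mulr_sumr; apply: eq_bigr => κ _.
    rewrite rmorphM rmorph_nat fmorph_div rmorphXn rmorph_nat /= exprMn.
    have hPQ : ((P * Q)%:R : R[i]) != 0 by rewrite pnatr_eq0.
    field; by rewrite !(addrC 1) !natr1 !pnatr_eq0 -!lt0n fact_gt0.
  by rewrite Im_rmul Im_gk mulr0.
rewrite e in h2.
by rewrite -(cvg_lim _ h2) ?lim_cst.
Qed.


Lemma iter_scale (c : R[i]) (X : op R K) k :
  iter k (Lstar alpha) (fun a b => c * X a b) =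
  fun a b => c * iter k (Lstar alpha) X a b.
Proof. elim: k => [//|k IH]; by rewrite iterS IH Lstar_scale. Qed.

Lemma T_outer i i' j j' t :
  Tstar alpha t (outer (eb i j) (eb i' j')) = RHS i i' j j' t.
Proof.
apply/funext => a; apply/funext => b; rewrite /Tstar /opexp.
exact: ccvg_lim (T_ccvg i i' j j' t a b).
Qed.

Lemma T_scale_outer (c : R[i]) i i' j j' t :
  Tstar alpha t (fun k k' => c * outer (eb i j) (eb i' j') k k') =
  fun a b => c * RHS i i' j j' t a b.
Proof.
apply/funext => a; apply/funext => b; rewrite /Tstar /opexp.
apply: ccvg_lim; apply: (ccvg_ext _ (ccvgZ c (T_ccvg i i' j j' t a b))) => k.
by rewrite iter_scale mulrCA.
Qed.

Local Notation sq := ((Num.sqrt ((P * Q)%:R : R))%:C).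

Lemma Omega_rhoE x : @Omega_rho R P Q x = sq^-1 * eb x.1.1 x.1.2 x.2.
Proof.
rewrite /Omega_rho; congr (_ * _).
rewrite (eq_bigr (fun ij : K => (ij == x.1)%:R * eb ij.1 ij.2 x.2)).
  by rewrite sum_dl.
move=> [u v] _; rewrite /vtens /= ebasE eq_sym //.
Qed.

Lemma uvecE (m : 'I_P) (n : 'I_Q) x :
  @uvec R P Q m n x = sq^-1 * eb (zadd m x.1.1) (zadd n x.1.2) x.2.
Proof.
rewrite /uvec; congr (_ * _).
rewrite (eq_bigr (fun ij : K => (ij == x.1)%:R * eb (zadd m ij.1) (zadd n ij.2) x.2)).
  by rewrite sum_dl.
move=> [u v] _; rewrite /vtens /= ebasE eq_sym //.
Qed.

Lemma Omega_part t : Omega_t alpha t =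
  fun a b => ((P * Q)%:R)^-1 *
           \sum_(m : 'I_P) \sum_(n : 'I_Q)
             Phi alpha wp wq m n t * outer (@uvec R P Q m n) (@uvec R P Q m n) a b.
Proof.
apply/funext => a; apply/funext => b; rewrite /Omega_t /idtens.
have -> : (fun k k' => outer (@Omega_rho R P Q) (@Omega_rho R P Q) (a.1, k) (b.1, k')) =
   fun k k' => (sq^-1 * (sq^-1)^*) * outer (eb a.1.1 a.1.2) (eb b.1.1 b.1.2) k k'.
  apply/funext => k; apply/funext => k'.
  by rewrite /outer !Omega_rhoE /= rmorphM; ring.
rewrite T_scale_outer /RHS mulrCA; congr (_ * _).
rewrite mulr_sumr; apply: eq_bigr => m _; rewrite mulr_sumr; apply: eq_bigr => n _.
  by rewrite /outer !uvecE !rmorphM /=; ring.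
Qed.

End Main.

Theorem core (R : realType) (p' q' : nat)
  (alpha : 'I_p'.+1 -> 'I_q'.+1 -> R)
  (alpha00 : forall (i : 'I_p'.+1) (j : 'I_q'.+1), (i : nat) = 0%N -> (j : nat) = 0%N ->
     alpha i j = 0)
  (wp wq : R[i]) (hwp : p'.+1.-primitive_root wp) (hwq : q'.+1.-primitive_root wq) :
  (forall (i i' : 'I_p'.+1) (j j' : 'I_q'.+1) (t : R), 0 <= t ->
     Tstar alpha t (outer (ebas i j) (ebas i' j')) =
     (fun a b => ((p'.+1 * q'.+1)%:R)^-1 *
        \sum_(m : 'I_p'.+1) \sum_(n : 'I_q'.+1)
          Phi alpha wp wq m n t *
          outer (ebas (zadd m i) (zadd n j)) (ebas (zadd m i') (zadd n j')) a b))
  /\ (forall (m : 'I_p'.+1) (n : 'I_q'.+1) (t : R), 0 <= t ->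
        complex.Im (Phi alpha wp wq m n t) = 0)
  /\ (forall t : R, 0 <= t ->
        Omega_t alpha t =
        (fun a b => ((p'.+1 * q'.+1)%:R)^-1 *
           \sum_(m : 'I_p'.+1) \sum_(n : 'I_q'.+1)
             Phi alpha wp wq m n t * outer (uvec m n) (uvec m n) a b)).
Proof.
split; [|split].
- move=> i i' j j' t _; exact: (T_outer alpha00 hwp hwq).
- move=> m n t _; exact: (Phi_real alpha00 hwp hwq).
- move=> t _; exact: (Omega_part alpha00 hwp hwq).
Qed.

Unset Implicit Arguments.
Set Strict Implicit.

Theorem mainTheorem9 (R : realType) (p q : nat) (hp : (0 < p)%N) (hq : (0 < q)%N)
  (alpha : 'I_p -> 'I_q -> R)
  (alpha_ge0 : forall i j, 0 <= alpha i j)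
  (alpha_le1 : forall i j, alpha i j <= 1)
  (alpha_sum : \sum_(i : 'I_p) \sum_(j : 'I_q) alpha i j = 1)
  (alpha00 : forall (i : 'I_p) (j : 'I_q), (i : nat) = 0%N -> (j : nat) = 0%N ->
     alpha i j = 0)
  (wp wq : R[i]) (hwp : p.-primitive_root wp) (hwq : q.-primitive_root wq) :
  (* (i) *)
  (forall (i i' : 'I_p) (j j' : 'I_q) (t : R), 0 <= t ->
     Tstar alpha t (outer (ebas i j) (ebas i' j')) =
     (fun a b => ((p * q)%:R)^-1 *
        \sum_(m : 'I_p) \sum_(n : 'I_q)
          Phi alpha wp wq m n t *
          outer (ebas (zadd m i) (zadd n j)) (ebas (zadd m i') (zadd n j')) a b))
  /\ (forall (m : 'I_p) (n : 'I_q) (t : R), 0 <= t ->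
        complex.Im (Phi alpha wp wq m n t) = 0)
  (* (ii) *)
  /\ (forall t : R, 0 <= t ->
        Omega_t alpha t =
        (fun a b => ((p * q)%:R)^-1 *
           \sum_(m : 'I_p) \sum_(n : 'I_q)
             Phi alpha wp wq m n t * outer (uvec m n) (uvec m n) a b)).
Proof.
Proof.
destruct p as [|p']; first by [].
destruct q as [|q']; first by [].
exact: (core alpha00 hwp hwq).
Qed.
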